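(* Let $\mathcal{T}=(\mathbb{K}_i,\phi_i)$ be a tower with $\mathbb{K}_0=\emptyset$ whose maps are elementary inclusions or elementary contractions, with width $\omega=\max_i|\mathbb{K}_i|$. Run the streaming reduction algorithm described below on the stream obtained from the active small coning filtration of $\mathcal{T}$. Then at every moment during the algorithm, the number of columns stored in $M$ is at most $2\omega$.
   Context: Elementary inclusion: $\mathbb{K}_{i+1}=\mathbb{K}_i\cup\{\sigma\}$; elementary contraction of distinct vertices $u,v$: one of them, say $v$, disappears, $\phi_i(u)=\phi_i(v)=u$, identity elsewhere, $\mathbb{K}_{i+1}=\phi_i(\mathbb{K}_i)$. Active small coning construction: $\hat{\mathbb{K}}_0=\emptyset$; vertices flagged active/inactive (simplex active iff all its vertices are); inclusion of $\sigma$ adds $\sigma$ (new vertices active); contraction of $u,v$ adds $\{\{v\}\cup\tau:\tau\in\mathrm{Act}\overline{\mathrm{St}}(u,\hat{\mathbb{K}}_i)\}$ and marks $u$ inactive if $|\mathrm{Act}\overline{\mathrm{St}}(u,\hat{\mathbb{K}}_i)|\le|\mathrm{Act}\overline{\mathrm{St}}(v,\hat{\mathbb{K}}_i)|$ (symmetric otherwise), $\mathrm{Act}\overline{\mathrm{St}}(w,\hat{\mathbb{K}}_i)$ being the active simplices of $\hat{\mathbb{K}}_i$ in the closed star of $w$; the active simplices of $\hat{\mathbb{K}}_i$ form (a copy of) $\mathbb{K}_i$. Input stream: for $i=0,1,\dots$, elements (ADDITION, $\sigma$, facets of $\sigma$) for the simplices of $\hat{\mathbb{K}}_{i+1}\setminus\hat{\mathbb{K}}_i$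 in increasing dimension, and (INACTIVE, $\sigma$) for every simplex becoming inactive at step $i$; simplices indexed by stream position. Algorithm over $\mathbb{Z}_2$ with matrix $M$ stored as a dictionary of columns (sets of row indices; pivot = largest row index); a simplex is negative if its reduced column is nonzero. reduce_column($j$): delete row indices of column $j$ that are inactive and negative; then while column $j$ is nonzero and its pivot equals the pivot of another column $k<j$ in $M$, add column $k$ to column $j$. remove_row($\ell$): with $j$ the column of pivot $\ell$, add column $j$ to every other column of $M$ with an entry in row $\ell$, then delete column $j$ from $M$. Main loop: on ADDITION of $j$, insert its column and call reduce_column($j$); delete it if zero, otherwise report $(\ell,j)$ for its pivot $\ell$ and call remove_row($\ell$) if $\ell$ is inactive. On (INACTIVE, $\ell$), call remove_row($\ell$) if $\ell$ is a pivot of a column in $M$. *)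

(* Defs.v *)
From mathcomp Require Import all_boot finmap.
Set Implicit Arguments.
Unset Strict Implicit.
Unset Printing Implicit Defensive.
Local Open Scope fset_scope.
Local Open Scope fmap_scope.

Definition tsimplex := {fset nat}.
Definition tcomplex := {fset tsimplex}.

(* Elementary maps: [Incl s] is the elementary inclusion of s;
   [Contr u v] is the elementary contraction of u and v in which v
   disappears: phi(u) = phi(v) = u, identity elsewhere. *)
Inductive top := Incl of tsimplex | Contr of nat & nat.

Definition is_vertex (K : tcomplex) (x : nat) : bool := [fset x] \in K.

Definition contr_map (u v : nat) (x : nat) : nat := if x == v then u else x.

Definition contr_simplex (u v : nat) (t : tsimplex) : tsimplex :=
  [fset contr_map u v x | x in t].

Definition op_valid (K : tcomplex) (o : top) : Prop :=
  match o with
  | Incl s => s != fset0 /\ s \notin K /\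
              (forall t : tsimplex, t `<` s -> t != fset0 -> t \in K)
  | Contr u v => u != v /\ is_vertex K u /\ is_vertex K v
  end.

(* Active small coning.  Vertices of hat K are pairs (x, i): the tower  *)
(* vertex x created at step i (this guarantees fresh names).            *)
Definition hvert := (nat * nat)%type.
Definition hsimplex := {fset hvert}.

Record cstate := CState {
  cK   : tcomplex;
  chat : {fset hsimplex};
  cact : {fset hvert};
  crho : nat -> hvert          (* tower vertex |-> its active copy in hat K_i *)
}.

Definition init_cstate : cstate :=
  CState fset0 fset0 fset0 (fun x => (x, 0)).

Definition active (A : {fset hvert}) (s : hsimplex) : bool := s `<=` A.

Definition act_star (H : {fset hsimplex}) (A : {fset hvert}) (w : hvert)
  : {fset hsimplex} :=
  [fset t in H | active A t &&
     has (fun s : hsimplex => (w \in s) && (t `<=` s)) (enum_fset H)].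

Definition cstep (i : nat) (st : cstate) (o : top) : cstate :=
  let K := cK st in let H := chat st in let A := cact st in
  let rho := crho st in
  match o with
  | Incl s =>
      let rho' := fun x => if (x \in s) && ~~ is_vertex K x then (x, i)
                           else rho x in
      let newv := [fset (x, i) | x in s & ~~ is_vertex K x] in
      CState (K `|` [fset s])
             (H `|` [fset [fset rho' x | x in s]])
             (A `|` newv) rho'
  | Contr u v =>
      let a := rho u in let b := rho v in
      let Sa := act_star H A a in let Sb := act_star H A b in
      let K' := [fset contr_simplex u v t | t in K] in
      if #|` Sa| <= #|` Sb| then
        CState K' (H `|` [fset b |` t | t in Sa]) (A `\ a)
               (fun x => if x == u then b else rho x)
      else
        CState K' (H `|` [fset a |` t | t in Sb]) (A `\ b)
               (fun x => if x == u then a else rho x)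
  end.

Fixpoint states_from (i : nat) (st : cstate) (ops : seq top) : seq cstate :=
  st :: match ops with
        | [::] => [::]
        | o :: os => states_from i.+1 (cstep i st o) os
        end.

Definition states (ops : seq top) : seq cstate := states_from 0 init_cstate ops.

Definition state_at (ops : seq top) (i : nat) : cstate :=
  nth init_cstate (states ops) i.

Definition valid_tower (ops : seq top) : Prop :=
  forall i, i < size ops -> op_valid (cK (state_at ops i)) (nth (Incl fset0) ops i).

Definition width (ops : seq top) : nat :=
  \max_(i < (size ops).+1) #|` cK (state_at ops i)|.

Definition newly_inactive (S S' : cstate) : {fset hsimplex} :=
  [fset t in chat S' | ~~ active (cact S') t &&
                       ((t \notin chat S) || active (cact S) t)].

(* bs = list of per-step blocks (added simplices in stream order,
   simplices flagged INACTIVE in stream order). *)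
Definition coning_blocks (ops : seq top) (bs : seq (seq hsimplex * seq hsimplex))
  : Prop :=
  size bs = size ops /\
  forall i, i < size ops ->
    let S := state_at ops i in let S' := state_at ops i.+1 in
    let ab := nth ([::], [::]) bs i in
    [/\ perm_eq ab.1 (enum_fset (chat S' `\` chat S)),
        sorted (fun s t : hsimplex => #|` s| <= #|` t|) ab.1 &
        perm_eq ab.2 (enum_fset (newly_inactive S S'))].

Inductive elem := ADDITION of nat & seq nat | INACTIVE of nat.

Definition facets (s : hsimplex) : seq hsimplex :=
  if 1 < #|` s| then [seq s `\ x | x <- enum_fset s] else [::].

(* Simplices are indexed by their position among the ADDITION elements. *)
Definition to_stream (bs : seq (seq hsimplex * seq hsimplex)) : seq elem :=
  let adds := flatten (map fst bs) in
  let ix := fun s : hsimplex => index s adds in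
  flatten [seq [seq ADDITION (ix s) (map ix (facets s)) | s <- p.1] ++
               [seq INACTIVE (ix s) | s <- p.2] | p <- bs].

(* A column is a set of row indices; M a finite map of columns.         *)
Definition column := {fset nat}.
Definition matrix := {fmap nat -> column}.

Definition addcol (c d : column) : column := (c `\` d) `|` (d `\` c).

Definition pivot (c : column) : option nat :=
  if c == fset0 then None else Some (\max_(x <- enum_fset c) x).

Definition lookup (M : matrix) (k : nat) : column := odflt fset0 M.[? k].

Record astate := AState { aM : matrix; ainact : seq nat; aneg : seq nat }.

(* Returns the successive
   matrices (the pivot strictly decreases, so fuel = pivot+1 suffices). *)
Fixpoint red_loop (fuel : nat) (M : matrix) (j : nat) : seq matrix :=
  match fuel with
  | 0 => [::]
  | f.+1 =>
    match pivot (lookup M j) with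
    | None => [::]
    | Some p =>
      match [seq k <- enum_fset (domf M) | (k < j) && (pivot (lookup M k) == Some p)] with
      | [::] => [::]
      | k :: _ => let M' := M.[j <- addcol (lookup M j) (lookup M k)] in
                  M' :: red_loop f M' j
      end
    end
  end.

Definition reduce_column (st : astate) (j : nat) : seq matrix :=
  let M := aM st in
  let c0 := [fset x in lookup M j | ~~ ((x \in ainact st) && (x \in aneg st))] in
  let M1 := M.[j <- c0] in
  M1 :: red_loop (\max_(x <- enum_fset c0) x).+2 M1 j.

Definition remove_row (M : matrix) (l : nat) : seq matrix :=
  match [seq k <- enum_fset (domf M) | pivot (lookup M k) == Some l] with
  | [::] => [::]
  | j :: _ =>
    let cj := lookup M j in
    let others := [seq k <- enum_fset (domf M) | (k != j) && (l \in lookup M k)] in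
    let tr := scanl (fun N k => N.[k <- addcol (lookup N k) cj]) M others in
    let Mf := last M tr in
    rcons tr Mf.[~ j]
  end.

Definition process (st : astate) (e : elem) : seq matrix * astate :=
  match e with
  | ADDITION j fs =>
      let M1 := (aM st).[j <- [fset x | x in fs]] in
      let st1 := AState M1 (ainact st) (aneg st) in
      let tr2 := reduce_column st1 j in
      let M2 := last M1 tr2 in
      match pivot (lookup M2 j) with
      | None => let M3 := M2.[~ j] in
                (M1 :: rcons tr2 M3, AState M3 (ainact st) (aneg st))
      | Some l =>
          let neg' := j :: aneg st in
          if l \in ainact st then
            let tr3 := remove_row M2 l in
            (M1 :: tr2 ++ tr3, AState (last M2 tr3) (ainact st) neg')
          else (M1 :: tr2, AState M2 (ainact st) neg')
      end
  | INACTIVE l =>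
      let inact' := l :: ainact st in
      let M := aM st in
      if has (fun k => pivot (lookup M k) == Some l) (enum_fset (domf M)) then
        let tr := remove_row M l in
        (tr, AState (last M tr) inact' (aneg st))
      else ([::], AState M inact' (aneg st))
  end.

Fixpoint run_from (st : astate) (s : seq elem) : seq matrix :=
  aM st :: match s with
           | [::] => [::]
           | e :: s' => let (tr, st') := process st e in tr ++ run_from st' s'
           end.

Definition alg_trace (s : seq elem) : seq matrix :=
  run_from (AState [fmap] [::] [::]) s.

Definition ncols (M : matrix) : nat := #|` domf M|.

(* Main.v *)
Require Import Defs.
From mathcomp Require Import all_boot finmap.
Set Implicit Arguments. Unset Strict Implicit. Unset Printing Implicit Defensive.

Module PartA.
Local Open Scope fset_scope.
Local Open Scope fmap_scope.

Lemma lookup_set (M : matrix) k c k' :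
  lookup M.[k <- c] k' = if k' == k then c else lookup M k'.
Proof. by rewrite /lookup fnd_set; case: eqP. Qed.
Lemma lookup_rem (M : matrix) k k' :
  lookup M.[~ k] k' = if k' == k then fset0 else lookup M k'.
Proof. by rewrite /lookup fnd_rem1; case: eqP. Qed.

Lemma max_seq_mem (s : seq nat) : s != [::] -> \max_(x <- s) x \in s.
Proof.
elim: s => // a [|b s] IH _; first by rewrite big_seq1 inE.
rewrite big_cons; have Hm := IH isT.
rewrite inE; case: (leqP a (\max_(x <- b :: s) x)) => h.
  by rewrite Hm orbT.
by rewrite eqxx.
Qed.

Lemma enum_fset_nil (c : column) : c != fset0 -> enum_fset c != [::].
Proof. case/fset0Pn => x xc; apply/eqP => E. by move: xc; rewrite -[x \in c]/(x \in enum_fset c) E. Qed.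

Lemma pivotP (c : column) p :
  pivot c = Some p <-> (p \in c /\ forall x, x \in c -> x <= p).
Proof.
rewrite /pivot; split.
  case: eqP => // /eqP c0 [<-]; split.
    exact: max_seq_mem (enum_fset_nil c0).
  by move=> x xc; apply: (leq_bigmax_seq (F:=id) x xc isT).
move=> [pc pm]; case: eqP => [c0|_]; first by rewrite c0 inE in pc.
congr Some; apply/eqP; rewrite eqn_leq; apply/andP; split.
  by apply/bigmax_leqP_seq => x xc _; apply: pm.
exact: (leq_bigmax_seq (F:=id) p pc isT).
Qed.

Lemma pivotN (c : column) : pivot c = None <-> c = fset0.
Proof. by rewrite /pivot; case: eqP. Qed.

Lemma pivot_le (c : column) x : x \in c -> exists2 p, pivot c = Some p & x <= p.
Proof.
move=> xc; case E: (pivot c) => [p|].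
  by exists p => //; move/pivotP: E => [_ ]; apply.
by move/pivotN: E => E; rewrite E inE in xc.
Qed.

Lemma addcolE (c d : column) x : (x \in addcol c d) = (x \in c) (+) (x \in d).
Proof. by rewrite /addcol !inE; case: (x \in c); case: (x \in d). Qed.

Lemma addcol_sub (c d : column) x : x \in addcol c d -> (x \in c) || (x \in d).
Proof. by rewrite addcolE; case: (x \in c); case: (x \in d). Qed.

Lemma addcol_same (c d : column) p : pivot c = Some p -> pivot d = Some p ->
  forall x, x \in addcol c d -> x < p.
Proof.
move=> /pivotP [pc pcm] /pivotP [pd pdm] x.
rewrite addcolE ltn_neqAle.
case xc: (x \in c); case xd: (x \in d) => //= _.
  by rewrite (pcm _ xc) andbT; apply/eqP => ex; rewrite ex pd in xd.
by rewrite (pdm _ xd) andbT; apply/eqP => ex; rewrite ex pc in xc.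
Qed.

Lemma addcol_lt (c d : column) p q : pivot c = Some p -> pivot d = Some q -> q < p ->
  pivot (addcol c d) = Some p.
Proof.
move=> /pivotP [pc pcm] /pivotP [qd qdm] qp; apply/pivotP; split.
  rewrite addcolE pc /=; apply/negP => /qdm; rewrite leqNgt qp.
  done.
move=> x /addcol_sub /orP [/pcm //| /qdm xq]; exact: leq_trans xq (ltnW qp).
Qed.

Definition rows_lt (B : nat) (M : matrix) := forall k x, x \in lookup M k -> x < B.

Definition term_ok (M : matrix) j :=
  pivot (lookup M j) = None \/
  exists2 p, pivot (lookup M j) = Some p &
    forall k, k \in domf M -> k < j -> pivot (lookup M k) != Some p.

Lemma rows_lt_set B (M : matrix) j c :
  rows_lt B M -> (forall x, x \in c -> x < B) -> rows_lt B M.[j <- c].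
Proof. by move=> HM Hc k x; rewrite lookup_set; case: eqP => _; [apply: Hc|apply: HM]. Qed.

Lemma rows_lt_rem B (M : matrix) j : rows_lt B M -> rows_lt B M.[~ j].
Proof. by move=> HM k x; rewrite lookup_rem; case: eqP => _; [rewrite inE|apply: HM]. Qed.

Lemma red_loop_spec fuel (M : matrix) j :
  j \in domf M ->
  (forall p, pivot (lookup M j) = Some p -> p < fuel) ->
  [/\ all (fun N : matrix => domf N == domf M) (red_loop fuel M j),
      forall k, k != j -> lookup (last M (red_loop fuel M j)) k = lookup M k,
      forall B, rows_lt B M -> rows_lt B (last M (red_loop fuel M j)),
      domf (last M (red_loop fuel M j)) = domf M &
      term_ok (last M (red_loop fuel M j)) j].
Proof.
elim: fuel M => [|f IH] M jM Hf.
  split=> //=; left; case E: (pivot _) => [p|] //; by have := Hf _ E.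
rewrite /=; case E: (pivot (lookup M j)) => [p|]; last by split=> //; left.
case F: [seq k <- _ | _] => [|k ks].
  split=> //=; right; exists p => // k kM kj; apply/negP => /eqP Hk.
  have : k \in [seq k <- enum_fset (domf M) | (k < j) && (pivot (lookup M k) == Some p)].
    by rewrite mem_filter kj Hk eqxx.
  by rewrite F.
have : k \in [seq k <- enum_fset (domf M) | (k < j) && (pivot (lookup M k) == Some p)].
  by rewrite F inE eqxx.
rewrite mem_filter => /andP [/andP [kj /eqP Ek] kM].
set M1 := M.[j <- _].
have dM1 : domf M1 = domf M by rewrite dom_setf; apply/fsetP => x; rewrite in_fset1U; case: eqP => // ->; rewrite jM.
have jM1 : j \in domf M1 by rewrite dM1.
have Hf1 : forall q, pivot (lookup M1 j) = Some q -> q < f.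
  move=> q; rewrite lookup_set eqxx => /pivotP [qc _].
  have := addcol_same E Ek qc => qp; have := Hf _ E; rewrite ltnS => pf.
  exact: leq_trans qp pf.
have [IH1 IH2 IH3 IH4 IH5] := IH M1 jM1 Hf1.
split=> //=.
- rewrite -(dom_setf M j (addcol (lookup M j) (lookup M k))) -/M1 dM1 eqxx /= -dM1; exact: IH1.
- by move=> k' k'j; rewrite IH2 // lookup_set (negPf k'j).
- move=> B HB; apply: IH3; apply: rows_lt_set => // x /addcol_sub /orP [] /HB //.
- by rewrite IH4.
Qed.

Lemma fold_spec (ks : seq nat) (M : matrix) c :
  uniq ks -> {subset ks <= domf M} ->
  all (fun N : matrix => domf N == domf M)
      (scanl (fun N k => N.[k <- addcol (lookup N k) c]) M ks) /\
  forall k, lookup (last M (scanl (fun N k => N.[k <- addcol (lookup N k) c]) M ks)) k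
            = if k \in ks then addcol (lookup M k) c else lookup M k.
Proof.
elim: ks M => [|k ks IH] M /=; first by split=> // k.
move=> /andP [kks uks] sub.
have kM : k \in domf M by apply: sub; rewrite inE eqxx.
set M1 := M.[k <- _].
have dM1 : domf M1 = domf M.
  by rewrite dom_setf; apply/fsetP => x; rewrite in_fset1U; case: eqP => // ->; rewrite kM.
have sub1 : {subset ks <= domf M1} by move=> x xs; rewrite dM1; apply: sub; rewrite inE xs orbT.
have [H1 H2] := IH M1 uks sub1.
split; first by rewrite -(dom_setf M k (addcol (lookup M k) c)) -/M1 dM1 eqxx /= -dM1.
move=> k'; rewrite H2 inE /M1 !lookup_set.
case: eqP => [->|_] /=; first by rewrite (negPf kks).
by case: (k' \in ks).
Qed.

Definition piv_ok (M : matrix) :=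
  (forall k, k \in domf M -> pivot (lookup M k) != None) /\
  (forall k1 k2, k1 \in domf M -> k2 \in domf M ->
     pivot (lookup M k1) = pivot (lookup M k2) -> k1 = k2).

Lemma remove_row_spec (M : matrix) l :
  piv_ok M -> (exists2 j0, j0 \in domf M & pivot (lookup M j0) = Some l) ->
  [/\ all (fun N : matrix => domf N `<=` domf M) (remove_row M l),
      exists j0, [/\ j0 \in domf M, pivot (lookup M j0) = Some l,
        domf (last M (remove_row M l)) = domf M `\ j0 &
        forall k, k \in domf (last M (remove_row M l)) ->
          pivot (lookup (last M (remove_row M l)) k) = pivot (lookup M k)] &
      forall B, rows_lt B M -> rows_lt B (last M (remove_row M l))].
Proof.
move=> [P1 P2] [j1 j1M Ej1]; rewrite /remove_row.
case F: [seq k <- _ | _] => [|j ks].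
  have : j1 \in [seq k <- enum_fset (domf M) | pivot (lookup M k) == Some l].
    by rewrite mem_filter Ej1 eqxx.
  by rewrite F.
have : j \in [seq k <- enum_fset (domf M) | pivot (lookup M k) == Some l].
  by rewrite F inE eqxx.
rewrite mem_filter => /andP [/eqP Ej jM].
set others := [seq k <- _ | _].
have uo : uniq others by apply: filter_uniq; apply: fset_uniq.
have so : {subset others <= domf M} by move=> x; rewrite mem_filter => /andP [].
have [S1 S2] := fold_spec (lookup M j) uo so.
set tr := scanl _ M others in S1 S2 *.
rewrite last_rcons.
split.
- rewrite all_rcons; apply/andP; split.
    rewrite domf_rem; apply/fsubsetP => x; rewrite in_fsetD => /andP [_].
    by case: (lastP tr) (S1) => [|t z] //=; rewrite last_rcons all_rcons => /andP [/eqP ->].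
  by apply: sub_all S1 => N /eqP ->; apply: fsubset_refl.
- have dL : domf (last M tr) = domf M.
    by case: (lastP tr) (S1) => [|t z] //=; rewrite last_rcons all_rcons => /andP [/eqP ->].
  exists j; split=> //; first by rewrite domf_rem dL.
  move=> k; rewrite lookup_rem domf_rem dL in_fsetD inE => /andP [kj kM].
  rewrite (negPf kj) S2.
  case: ifP => // ko.
  move: ko; rewrite mem_filter => /andP [/andP [_ lk] _].
  have [p Ep lp] := pivot_le lk.
  have lt : l < p.
    rewrite ltn_neqAle lp andbT; apply/eqP => el.
    by move: kj; rewrite (P2 k j kM jM) ?eqxx // Ep Ej el.
  by rewrite Ep; apply: addcol_lt Ep Ej lt.
- move=> B HB; apply: rows_lt_rem => k x; rewrite S2; case: ifP => _; last exact: HB.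
  by move/addcol_sub => /orP [] /HB.
Qed.

Definition alg_inv N (st : astate) :=
  [/\ forall k, k \in domf (aM st) -> k < N,
      rows_lt N (aM st),
      piv_ok (aM st) &
      forall k p, k \in domf (aM st) -> pivot (lookup (aM st) k) = Some p ->
        p \notin ainact st].

Lemma domf_set_in (M : matrix) k c : k \in domf M -> domf M.[k <- c] = domf M.
Proof. by move=> kM; rewrite dom_setf; apply/fsetP => x; rewrite in_fset1U; case: eqP => // ->; rewrite kM. Qed.

Lemma reduce_spec N st fs : alg_inv N st -> all (fun x => x < N) fs ->
  let M1 := (aM st).[N <- [fset x | x in fs]] in
  let st1 := AState M1 (ainact st) (aneg st) in
  let M2 := last M1 (reduce_column st1 N) in
  [/\ all (fun M : matrix => domf M == N |` domf (aM st)) (reduce_column st1 N),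
      domf M2 = N |` domf (aM st),
      forall k, k != N -> lookup M2 k = lookup (aM st) k,
      rows_lt N M2 & term_ok M2 N].
Proof.
move=> [I0 I1 I2 I3] Hfs M1 st1 M2.
rewrite /M2 /reduce_column -[aM st1]/M1 -[ainact st1]/(ainact st) -[aneg st1]/(aneg st).
set c0 := [fset x in lookup M1 N | _].
set M1' := M1.[N <- c0].
have dM1 : domf M1 = N |` domf (aM st) by rewrite dom_setf.
have dM1' : domf M1' = N |` domf (aM st) by rewrite /M1' domf_set_in // dM1 fset1U1.
have NM1' : N \in domf M1' by rewrite dM1' fset1U1.
have Hf : forall p, pivot (lookup M1' N) = Some p -> p < (\max_(x <- enum_fset c0) x).+2.
  move=> p; rewrite /M1' lookup_set eqxx => /pivotP [pc _].
  apply: leq_trans (leqnSn _); rewrite ltnS.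
  exact: (leq_bigmax_seq (F:=id) p pc isT).
have [R1 R2 R3 R4 R5] := red_loop_spec NM1' Hf.
have HR : rows_lt N M1'.
  apply: rows_lt_set; first apply: rows_lt_set => //.
    by move=> x; rewrite in_fset /= => xfs; move/allP: Hfs; apply.
  move=> x; rewrite in_fset /= => /andP [+ _]; rewrite /M1 lookup_set eqxx in_fset /=.
  by move=> xfs; move/allP: Hfs; apply.
split.
- apply/allP => M; rewrite inE => /orP [/eqP -> | MR]; first by rewrite dM1'.
  by move/allP: R1 => /(_ M MR) /eqP ->; rewrite dM1'.
- by rewrite R4.
- by move=> k kN; rewrite R2 // /M1' /M1 !lookup_set (negPf kN).
- exact: R3.
- exact: R5.
Qed.

Lemma piv_ok_sub (M M0 : matrix) :
  piv_ok M0 -> domf M `<=` domf M0 ->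
  (forall k, k \in domf M -> pivot (lookup M k) = pivot (lookup M0 k)) -> piv_ok M.
Proof.
move=> [P1 P2] /fsubsetP sub E; split.
  by move=> k kM; rewrite E //; apply: P1; apply: sub.
by move=> k1 k2 k1M k2M; rewrite !E //; apply: P2; apply: sub.
Qed.

Lemma process_add N st fs : alg_inv N st -> all (fun x => x < N) fs ->
  [/\ all (fun M : matrix => domf M `<=` N |` domf (aM st)) (process st (ADDITION N fs)).1,
      domf (aM (process st (ADDITION N fs)).2) `<=` N |` domf (aM st),
      alg_inv N.+1 (process st (ADDITION N fs)).2 &
      ainact (process st (ADDITION N fs)).2 = ainact st].
Proof.
move=> Hinv Hfs; have [I0 I1 [P1 P2] I3] := Hinv.
have [R1 R2 R3 R4 R5] := reduce_spec Hinv Hfs.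
move: R1 R2 R3 R4 R5.
rewrite /process.
set M1 := (aM st).[N <- _].
set st1 := AState M1 _ _.
set tr2 := reduce_column st1 N.
set M2 := last M1 tr2.
move=> R1 R2 R3 R4 R5.
have NM : N \notin domf (aM st) by apply/negP => /I0; rewrite ltnn.
have dM1 : domf M1 = N |` domf (aM st) by rewrite dom_setf.
have trok : all (fun M : matrix => domf M `<=` N |` domf (aM st)) (M1 :: tr2).
  apply/andP; split; first by rewrite dM1 fsubset_refl.
  apply: sub_all R1 => M /eqP ->; exact: fsubset_refl.
have rowsN1 : forall M, rows_lt N M -> rows_lt N.+1 M.
  by move=> M HM k x /HM /ltnW.
clearbody st1 tr2 M2.
have pivM2 : forall k, k \in domf M2 -> k != N -> pivot (lookup M2 k) = pivot (lookup (aM st) k).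
  by move=> k _ kN; rewrite R3.
have kD : forall k, k \in domf M2 -> k != N -> k \in domf (aM st).
  by move=> k; rewrite R2 in_fset1U => /orP [/eqP ->|]; rewrite ?eqxx.
case EP: (pivot (lookup M2 N)) => [l|].
- have piv2 : piv_ok M2.
    split.
      move=> k kM; case: (eqVneq k N) => [->|kN]; first by rewrite EP.
      by rewrite pivM2 //; apply: P1; apply: kD.
    move=> k1 k2 k1M k2M.
    case: (eqVneq k1 N) => [->|k1N]; case: (eqVneq k2 N) => [->|k2N] //.
    + rewrite EP => E; case: R5 => [|[p Ep Hp]]; first by rewrite EP.
      move: EP; rewrite Ep => -[el]; subst p.
      by move: (Hp k2 k2M (I0 _ (kD _ k2M k2N))); rewrite -E eqxx.
    + rewrite EP => E; case: R5 => [|[p Ep Hp]]; first by rewrite EP.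
      move: EP; rewrite Ep => -[el]; subst p.
      by move: (Hp k1 k1M (I0 _ (kD _ k1M k1N))); rewrite E eqxx.
    + rewrite !pivM2 // => E; apply: P2 => //; exact: kD.
  have NM2 : N \in domf M2 by rewrite R2 fset1U1.
  case: ifP => linact.
  + have [T1 [j0 [j0M Ej0 dF pF]] T3] := remove_row_spec piv2 (ex_intro2 _ _ N NM2 EP).
    have j0N : j0 = N by case: piv2 => _ /(_ _ _ j0M NM2); apply; rewrite Ej0 EP.
    subst j0.
    move: T1 dF pF T3; set tr3 := remove_row M2 l; clearbody tr3 => T1 dF pF T3.
    have kF : forall k, k \in domf (last M2 tr3) -> (k != N) && (k \in domf (aM st)).
      move=> k; rewrite dF in_fsetD1 => /andP [kN kM]; by rewrite kN kD.
    split=> //=.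
    * rewrite all_cat; apply/andP; split; first by move: trok => /= /andP [].
      apply/andP; split; first by move: trok => /= /andP [_].
      apply: sub_all T1 => M /fsubset_trans; apply; rewrite -R2; exact: fsubset_refl.
    * apply/fsubsetP => k /kF /andP [_ kM]; exact: fset1Ur.
    * split=> /=.
      -- move=> k /kF /andP [_ /I0]; exact: ltnW.
      -- by apply: rowsN1; apply: T3.
      -- apply: (piv_ok_sub (conj P1 P2)).
           by apply/fsubsetP => k /kF /andP [].
         move=> k kF'; have /andP [kN kM] := kF k kF'; rewrite pF // pivM2 //.
         by rewrite R2 fset1Ur.
      -- move=> k p kF' Ep; have /andP [kN kM] := kF k kF'.
         by apply: (I3 k) => //; rewrite -pivM2 ?R2 ?fset1Ur // -pF.
  + split=> //=.
    * by rewrite R2.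
    * split=> /=.
      -- move=> k; rewrite R2 in_fset1U => /orP [/eqP ->//|/I0]; exact: ltnW.
      -- exact: rowsN1.
      -- exact: piv2.
      -- move=> k p kM Ep; case: (eqVneq k N) => [kN|kN].
           by subst k; move: Ep; rewrite EP => -[<-]; rewrite linact.
         by apply: (I3 k); [apply: kD | rewrite -pivM2].
- set M3 := M2.[~ N].
  have dM3 : domf M3 = domf M2 `\ N by rewrite domf_rem.
  have lM3 : forall k, lookup M3 k = if k == N then fset0 else lookup M2 k.
    by move=> k; rewrite lookup_rem.
  have rM3 : rows_lt N M3 by apply: rows_lt_rem.
  clearbody M3.
  have kF : forall k, k \in domf M3 -> (k != N) && (k \in domf (aM st)).
    move=> k; rewrite dM3 in_fsetD1 => /andP [kN kM]; by rewrite kN kD.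
  split=> //=.
  + apply/andP; split; first by move: trok => /= /andP [].
    rewrite all_rcons; apply/andP; split; last by move: trok => /= /andP [].
    apply/fsubsetP => k /kF /andP [_ kM]; exact: fset1Ur.
  + apply/fsubsetP => k /kF /andP [_ kM]; exact: fset1Ur.
  + split=> /=.
    * move=> k /kF /andP [_ /I0]; exact: ltnW.
    * by apply: rowsN1.
    * apply: (piv_ok_sub (conj P1 P2)); first by apply/fsubsetP => k /kF /andP [].
      move=> k kF'; have /andP [kN kM] := kF k kF'.
      by rewrite lM3 (negPf kN) pivM2 // R2 fset1Ur.
    * move=> k p kF' Ep; have /andP [kN kM] := kF k kF'.
      apply: (I3 k) => //; rewrite -pivM2 ?R2 ?fset1Ur //.
      by rewrite -Ep lM3 (negPf kN).
Qed.

Lemma process_inact N st l : alg_inv N st ->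
  [/\ all (fun M : matrix => domf M `<=` domf (aM st)) (process st (INACTIVE l)).1,
      domf (aM (process st (INACTIVE l)).2) `<=` domf (aM st),
      alg_inv N (process st (INACTIVE l)).2 &
      ainact (process st (INACTIVE l)).2 = l :: ainact st].
Proof.
move=> Hinv; have [I0 I1 [P1 P2] I3] := Hinv.
rewrite /process; case: hasP => [[j0 j0M /eqP Ej0]|Hn].
- have [T1 [j1 [j1M Ej1 dF pF]] T3] := remove_row_spec (conj P1 P2) (ex_intro2 _ _ j0 j0M Ej0).
  move: T1 dF pF T3; set tr := remove_row _ l; clearbody tr => T1 dF pF T3.
  have kF : forall k, k \in domf (last (aM st) tr) -> (k != j1) && (k \in domf (aM st)).
    by move=> k; rewrite dF in_fsetD1.
  split=> //.
  + by apply/fsubsetP => k /kF /andP [].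
  + split=> /=.
    * by move=> k /kF /andP [_ /I0].
    * exact: T3.
    * apply: (piv_ok_sub (conj P1 P2)); first by apply/fsubsetP => k /kF /andP [].
      by move=> k kF'; rewrite pF.
    * move=> k p kF' Ep; have /andP [kj kM] := kF k kF'.
      rewrite inE negb_or; apply/andP; split; last first.
        by apply: (I3 k) => //; rewrite -pF.
      apply/eqP => pl; subst p; move: kj; rewrite (P2 k j1 kM j1M) ?eqxx //.
      by rewrite -pF // Ep Ej1.
- split=> //=.
  split=> //= k p kM Ep; rewrite inE negb_or; apply/andP; split; last exact: (I3 k).
  apply/eqP => pl; subst p; apply: Hn; exists k => //; by rewrite Ep.
Qed.

Fixpoint wi (N : nat) (l : seq elem) : Prop :=
  match l with
  | [::] => True
  | ADDITION j fs :: l' => j = N /\ all (fun x => x < N) fs /\ wi N.+1 l'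
  | INACTIVE _ :: l' => wi N l'
  end.

Fixpoint nadd (l : seq elem) : nat :=
  match l with
  | [::] => 0
  | ADDITION _ _ :: l' => (nadd l').+1
  | INACTIVE _ :: l' => nadd l'
  end.

Fixpoint inacts (l : seq elem) : seq nat :=
  match l with
  | [::] => [::]
  | ADDITION _ _ :: l' => inacts l'
  | INACTIVE x :: l' => x :: inacts l'
  end.

Definition fin (st : astate) (l : seq elem) : astate :=
  foldl (fun st e => (process st e).2) st l.

Lemma ncols_sub (M : matrix) (D : {fset nat}) : domf M `<=` D -> ncols M <= #|` D|.
Proof. exact: fsubset_leq_card. Qed.

Lemma card_U1 (N : nat) (D : {fset nat}) : #|` N |` D| <= #|` D| + 1.
Proof. by rewrite cardfsU1 addnC leq_add2l; case: (N \notin D). Qed.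

Lemma run_from_cons st e l :
  run_from st (e :: l) = aM st :: (process st e).1 ++ run_from (process st e).2 l.
Proof. by rewrite /=; case: (process st e). Qed.

Lemma fin_cons st e l : fin st (e :: l) = fin (process st e).2 l.
Proof. by []. Qed.

Lemma run_spec l N st : alg_inv N st -> wi N l ->
  [/\ all (fun M => ncols M <= ncols (aM st) + nadd l) (run_from st l),
      ncols (aM (fin st l)) <= ncols (aM st) + nadd l,
      alg_inv (N + nadd l) (fin st l),
      {subset ainact st <= ainact (fin st l)} &
      {subset inacts l <= ainact (fin st l)}].
Proof.
elim: l N st => [|e l IH] N st Hinv.
  by move=> _; rewrite /= addn0 leqnn addn0; split.
case: e => [j fs|x] Hwi0; rewrite run_from_cons fin_cons.
- have [-> [Hfs Hwi]] : j = N /\ all (fun x => x < N) fs /\ wi N.+1 l := Hwi0.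
  have [A1 A2 A3 A4] := process_add Hinv Hfs.
  case E: (process st (ADDITION N fs)) A1 A2 A3 A4 => [tr st'] /= A1 A2 A3 A4.
  have [B1 B2 B3 B4 B5] := IH _ _ A3 Hwi.
  have c' : ncols (aM st') <= ncols (aM st) + 1.
    exact: leq_trans (ncols_sub A2) (card_U1 _ _).
  rewrite /=; split.
  + rewrite leq_addr /= all_cat; apply/andP; split.
      apply: sub_all A1 => M /ncols_sub H; apply: leq_trans H _.
      by apply: leq_trans (card_U1 _ _) _; rewrite leq_add2l.
    apply: sub_all B1 => M H; apply: leq_trans H _.
    by rewrite addnS -addn1 addnAC leq_add2r.
  + apply: leq_trans B2 _.
    by rewrite addnS -addn1 addnAC leq_add2r.
  + by rewrite addnS -addSn.
  + by move=> y yi; apply: B4; rewrite A4.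
  + exact: B5.
- have Hwi : wi N l := Hwi0.
  have [A1 A2 A3 A4] := process_inact x Hinv.
  case E: (process st (INACTIVE x)) A1 A2 A3 A4 => [tr st'] /= A1 A2 A3 A4.
  have [B1 B2 B3 B4 B5] := IH _ _ A3 Hwi.
  have c' : ncols (aM st') <= ncols (aM st) by apply: ncols_sub.
  rewrite /=; split => //.
  + rewrite leq_addr /= all_cat; apply/andP; split.
      apply: sub_all A1 => M /ncols_sub H; exact: leq_trans H (leq_addr _ _).
    apply: sub_all B1 => M H; apply: leq_trans H _; by rewrite leq_add2r.
  + by apply: leq_trans B2 _; rewrite leq_add2r.
  + by move=> y yi; apply: B4; rewrite A4 inE yi orbT.
  + move=> y; rewrite inE => /orP [/eqP ->|]; last exact: B5.
    by apply: B4; rewrite A4 inE eqxx.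
Qed.

End PartA.
Import PartA.

Module PartB.
Local Open Scope fset_scope.

Definition coning_inv (i : nat) (st : cstate) :=
  [/\ forall t t', t \in chat st -> t' `<=` t -> t' != fset0 -> t' \in chat st,
      forall t, t \in chat st -> active (cact st) t ->
        (exists2 s, s \in cK st & t = [fset crho st x | x in s]),
      forall s, s \in cK st -> ([fset crho st x | x in s] \in chat st) &&
                               active (cact st) [fset crho st x | x in s],
      forall x y, is_vertex (cK st) x -> is_vertex (cK st) y -> crho st x = crho st y -> x = y
    & [/\ forall t p, t \in chat st -> p \in t -> p.2 < i,
           forall p, p \in cact st -> p.2 < i &
           forall s x, s \in cK st -> x \in s -> is_vertex (cK st) x]].

Lemma init_inv : coning_inv 0 init_cstate.
Proof. by split=> //=. Qed.

Lemma img_eq_in (f g : nat -> hvert) (s : tsimplex) :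
  {in s, f =1 g} -> [fset f x | x in s] = [fset g x | x in s].
Proof.
move=> E; apply/fsetP => y; apply/imfsetP/imfsetP => -[x xs ->]; exists x => //.
  by rewrite E. by rewrite E.
Qed.

Lemma rho_vertex_act st i x : coning_inv i st -> is_vertex (cK st) x -> crho st x \in cact st.
Proof.
move=> [_ _ C3 _ _] xv; have /andP [_ act] := C3 _ xv.
by move/fsubsetP: act; apply; rewrite in_imfset //= inE.
Qed.

Lemma rho_vertex_H st i x : coning_inv i st -> is_vertex (cK st) x ->
  [fset crho st x] \in chat st.
Proof.
move=> [_ _ C3 _ _] xv; have /andP [H _] := C3 _ xv.
suff -> : [fset crho st x] = [fset crho st y | y in [fset x]] by [].
by apply/fsetP => y; rewrite inE; apply/eqP/imfsetP => [->|[z]]; [exists x; rewrite ?inE | rewrite inE => /eqP ->].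
Qed.

Lemma incl_inv i st s : coning_inv i st -> op_valid (cK st) (Incl s) ->
  coning_inv i.+1 (cstep i st (Incl s)).
Proof.
move=> Inv; have [C1 C2 C3 C4 [C5a C5b C6]] := Inv.
move=> [s0 [sK sub]].
rewrite /cstep /=.
set K := cK st; set H := chat st; set A := cact st; set rho := crho st.
set rho' := fun x => if _ then _ else _.
set newv := [fset _ | x in s & _].
have F1 : forall x, is_vertex K x -> rho' x = rho x.
  by move=> x xv; rewrite /rho' xv andbF.
have F2 : forall s', s' \in K -> [fset rho' x | x in s'] = [fset rho x | x in s'].
  by move=> s' s'K; apply: img_eq_in => x xs; apply: F1; apply: C6 xs.
have Fnew : forall p, p \in newv -> p.2 = i.
  by move=> p /imfsetP [x _ ->].
have F4 : forall x, x \in s -> is_vertex (K `|` [fset s]) x.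
  move=> x xs; rewrite /is_vertex in_fsetU; case: (eqVneq [fset x] s) => [->|ne].
    by rewrite inE eqxx orbT.
  apply/orP; left; apply: sub; last by apply/fset0Pn; exists x; rewrite inE.
  by rewrite fproperEneq ne /=; apply/fsubsetP => y; rewrite inE => /eqP ->.
have F5 : forall x, x \in s -> rho' x \in A `|` newv.
  move=> x xs; case xv: (is_vertex K x).
    by rewrite F1 // in_fsetU (rho_vertex_act Inv xv).
  by rewrite /rho' xs xv /= in_fsetU; apply/orP; right; apply/imfsetP; exists x => //=; rewrite inE xs xv.
have F6 : forall x, x \in s -> (rho' x).2 < i.+1.
  move=> x xs; case xv: (is_vertex K x).
    by rewrite F1 //; apply: ltnW; apply: C5b; apply: (rho_vertex_act Inv xv).
  by rewrite /rho' xs xv.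
have Fv : forall x, is_vertex (K `|` [fset s]) x -> ~~ is_vertex K x -> rho' x = (x, i).
  move=> x; rewrite /is_vertex in_fsetU inE => /orP [->//|/eqP e] _.
  rewrite /rho' -e inE eqxx /=; case: ifP => //.
  by rewrite /is_vertex e (negPf sK).
split=> /=.
- move=> t t'; rewrite in_fsetU inE => /orP [tH t't t'0|/eqP ->].
    by rewrite in_fsetU (C1 t t' tH t't t'0).
  move=> t's t'0.
  set s1 := [fset x in s | rho' x \in t'].
  have E : t' = [fset rho' x | x in s1].
    apply/fsetP => y; apply/idP/imfsetP.
      move=> yt; move/fsubsetP: t's => /(_ _ yt) /imfsetP [x xs ey].
      by exists x => //; rewrite /s1 !inE /= xs -ey.
    by move=> [x]; rewrite /s1 !inE /= => /andP [_ +] ->.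
  case: (eqVneq s1 s) => [e|ne].
    by rewrite in_fsetU inE E e eqxx orbT.
  have s1K : s1 \in K.
    apply: sub.
      by rewrite fproperEneq ne /=; apply/fsubsetP => x; rewrite inE => /andP [].
    apply: contra t'0; rewrite E => /eqP ->; apply/eqP/fsetP => y; rewrite inE.
    by apply/imfsetP => -[x]; rewrite inE.
  by rewrite in_fsetU E F2 // (andP (C3 _ s1K)).1.
- move=> t; rewrite in_fsetU inE => /orP [tH act|/eqP ->]; last first.
    by move=> _; exists s => //; rewrite in_fsetU inE eqxx orbT.
  have actA : active A t.
    apply/fsubsetP => p pt; move/fsubsetP: act => /(_ _ pt); rewrite in_fsetU => /orP [//|/Fnew e].
    by have := C5a _ _ tH pt; rewrite -/rho e ltnn.
  have [s' s'K ->] := C2 _ tH actA.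
  by exists s'; rewrite ?in_fsetU ?s'K // F2.
- move=> s'; rewrite in_fsetU inE => /orP [s'K|/eqP ->].
    have /andP [h a] := C3 _ s'K.
    rewrite F2 // in_fsetU h /=; apply: fsubset_trans a _; exact: fsubsetUl.
  rewrite !in_fsetU inE eqxx orbT /=; apply/fsubsetP => p /imfsetP [x xs ->].
  exact: F5.
- move=> x y xv yv; case xK: (is_vertex K x); case yK: (is_vertex K y).
  + by rewrite !F1 //; apply: C4.
  + rewrite F1 // Fv ?yK // => e.
    by have := C5b _ (rho_vertex_act Inv xK); rewrite -/rho e ltnn.
  + rewrite (F1 y) // Fv ?xK // => e.
    by have := C5b _ (rho_vertex_act Inv yK); rewrite -/rho -e ltnn.
  + by rewrite !Fv ?xK ?yK // => -[].
- split.
  + move=> t p; rewrite in_fsetU inE => /orP [tH pt|/eqP -> /imfsetP [x xs ->]].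
      by apply: ltnW; apply: C5a pt.
    exact: F6.
  + move=> p; rewrite in_fsetU => /orP [/C5b /ltnW //|/Fnew ->]; done.
  + move=> s' x; rewrite in_fsetU inE => /orP [s'K xs'|/eqP -> xs]; last exact: F4.
    by rewrite /is_vertex in_fsetU; apply/orP; left; exact: (C6 _ _ s'K xs').
Qed.

Lemma star_inv (H : {fset hsimplex}) A w t : t \in act_star H A w ->
  [/\ t \in H, active A t & exists2 s, s \in H & (w \in s) && (t `<=` s)].
Proof.
rewrite /act_star inE /= => /andP [tH /andP [ta /hasP [s sH ws]]].
by split=> //; exists s.
Qed.

Lemma in_star (H : {fset hsimplex}) A w t s : t \in H -> active A t -> s \in H ->
  w \in s -> t `<=` s -> t \in act_star H A w.
Proof.
move=> tH ta sH ws ts; rewrite /act_star !inE /=; apply/and3P; split=> //.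
by apply/hasP; exists s => //; rewrite ws ts.
Qed.

Lemma img_comp (f : nat -> nat) (g : nat -> hvert) (s : tsimplex) :
  [fset g y | y in [fset f x | x in s]] = [fset g (f x) | x in s].
Proof.
apply/fsetP => p; apply/imfsetP/imfsetP => [[y /imfsetP [x xs ->] ->]|[x xs ->]].
  by exists x.
by exists (f x) => //; apply/imfsetP; exists x.
Qed.

Lemma img_comp2 (g : nat -> hvert) (h : hvert -> hvert) (s : tsimplex) :
  [fset h q | q in [fset g x | x in s]] = [fset h (g x) | x in s].
Proof.
apply/fsetP => p; apply/imfsetP/imfsetP => [[y /imfsetP [x xs ->] ->]|[x xs ->]].
  by exists x.
by exists (g x) => //; apply/imfsetP; exists x.
Qed.

Lemma sig_notin (c d : hvert) (T : hsimplex) : c \notin T ->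
  [fset (if q == c then d else q) | q in T] = T.
Proof.
move=> cT; apply/fsetP => p; apply/imfsetP/idP => [[q qT ->]|pT].
  by case: eqP => [e|//]; rewrite -e qT in cT.
by exists p => //; case: eqP => [e|//]; rewrite -e pT in cT.
Qed.

Lemma sig_in (c d : hvert) (T : hsimplex) : c \in T ->
  [fset (if q == c then d else q) | q in T] = d |` (T `\ c).
Proof.
move=> cT; apply/fsetP => p; rewrite in_fset1U in_fsetD1.
apply/imfsetP/idP => [[q qT ->]|].
  by case: (eqVneq q c) => [e|qc]; rewrite ?eqxx //= qc qT orbT.
case/orP => [/eqP ->|/andP [pc pT]]; first by exists c => //; rewrite eqxx.
by exists p => //; rewrite (negPf pc).
Qed.

Lemma fset1_img (g : nat -> hvert) x : [fset g y | y in [fset x]] = [fset g x].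
Proof.
apply/fsetP => p; rewrite inE; apply/imfsetP/eqP => [[y]|->]; first by rewrite inE => /eqP -> ->.
by exists x; rewrite ?inE.
Qed.

Lemma fset1_imgn (g : nat -> nat) x : [fset g y | y in [fset x]] = [fset g x].
Proof.
apply/fsetP => p; rewrite inE; apply/imfsetP/eqP => [[y]|->]; first by rewrite inE => /eqP -> ->.
by exists x; rewrite ?inE.
Qed.

Lemma contr_inv_gen i st u v c d (rho' : nat -> hvert) :
  coning_inv i st -> u != v -> is_vertex (cK st) u -> is_vertex (cK st) v ->
  ((c = crho st u /\ d = crho st v) \/ (c = crho st v /\ d = crho st u)) ->
  (forall x, rho' x = if x == u then d else crho st x) ->
  coning_inv i.+1 (CState [fset contr_simplex u v t | t in cK st]
                          (chat st `|` [fset d |` t | t in act_star (chat st) (cact st) c])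
                          (cact st `\ c) rho').
Proof.
move=> Inv uv uK vK Hcd Hrho; have [C1 C2 C3 C4 [C5a C5b C6]] := Inv.
set K := cK st; set H := chat st; set A := cact st; set rho := crho st.
set Sc := act_star H A c.
set sig := fun q : hvert => if q == c then d else q.
have ruv : rho u != rho v by apply: contra uv => /eqP /(C4 _ _ uK vK) ->.
have cd : c != d by case: Hcd => -[-> ->] //; rewrite eq_sym.
have cA : c \in A by case: Hcd => -[-> _]; apply: (rho_vertex_act Inv).
have dA : d \in A by case: Hcd => -[_ ->]; apply: (rho_vertex_act Inv).
have dH : [fset d] \in H by case: Hcd => -[_ ->]; apply: (rho_vertex_H Inv).
have cuv : forall x, is_vertex K x -> (rho x == c) || (rho x == d) -> (x == u) || (x == v).
  move=> x xK /orP [] /eqP e; case: Hcd => -[ec ed]; move: e;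
  rewrite ?ec ?ed => /(C4 _ _ xK) => e;
  by rewrite (e uK) ?eqxx ?orbT // || by rewrite (e vK) ?eqxx ?orbT.
have P : forall x, is_vertex K x -> rho' (contr_map u v x) = sig (rho x).
  move=> x xK; rewrite Hrho /contr_map /sig.
  case: (eqVneq x v) => [->|xv]; rewrite ?eqxx.
    by case: Hcd => -[-> ->]; rewrite ?eqxx // eq_sym (negPf ruv).
  case: (eqVneq x u) => [->|xu]; rewrite ?eqxx.
    by case: Hcd => -[-> ->]; rewrite ?eqxx // (negPf ruv).
  case: eqP => [e|//]; have := cuv x xK; rewrite e eqxx /= => /(_ isT).
  by rewrite (negPf xu) (negPf xv).
have Img : forall s, s \in K ->
    [fset rho' y | y in contr_simplex u v s] = [fset sig q | q in [fset rho x | x in s]].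
  move=> s sK; rewrite /contr_simplex img_comp img_comp2; apply: img_eq_in => x xs.
  by apply: P; apply: C6 xs.
have actD : forall t, active (A `\ c) t -> active A t /\ c \notin t.
  move=> t /fsubsetP ta; split.
    by apply/fsubsetP => p /ta; rewrite in_fsetD1 => /andP [].
  by apply/negP => /ta; rewrite in_fsetD1 eqxx.
have actD' : forall t, active A t -> c \notin t -> active (A `\ c) t.
  move=> t /fsubsetP ta ct; apply/fsubsetP => p pt; rewrite in_fsetD1 ta // andbT.
  by apply: contra ct => /eqP <-.
have newP : forall t, t \in [fset d |` t | t in Sc] ->
    exists2 tau, t = d |` tau & [/\ tau \in H, active A tau &
      exists2 s, s \in H & (c \in s) && (tau `<=` s)].
  by move=> t /imfsetP [tau /star_inv tS ->]; exists tau.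
have newI : forall tau, tau \in Sc -> d |` tau \in [fset d |` t | t in Sc].
  by move=> tau tS; apply/imfsetP; exists tau.
have vK' : forall x', is_vertex [fset contr_simplex u v t | t in K] x' ->
    exists2 x, is_vertex K x & x' = contr_map u v x.
  move=> x' /imfsetP [s sK e].
  have [x xs] : exists x, x \in s.
    apply/fset0Pn; apply/negP => /eqP s0; move: e; rewrite s0 /contr_simplex => e.
    have : x' \in [fset x']; first by rewrite inE.
    by rewrite e => /imfsetP [y]; rewrite inE.
  exists x; first exact: C6 xs.
  have : contr_map u v x \in [fset x'] by rewrite e; apply/imfsetP; exists x.
  by rewrite inE => /eqP.
split=> /=.
- move=> t t'; rewrite in_fsetU => /orP [tH t't t'0|/newP [tau -> [tauH taua [s sH /andP [cs taus]]]]].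
    by rewrite in_fsetU (C1 _ _ tH t't t'0).
  move=> t't t'0; rewrite in_fsetU; case dt': (d \in t').
    case: (eqVneq (t' `\ d) fset0) => [e|ne].
      suff -> : t' = [fset d] by rewrite dH.
      by rewrite -(fsetD1K dt') e fsetU0.
    apply/orP; right; rewrite -(fsetD1K dt'); apply: newI.
    have sub : t' `\ d `<=` tau.
      apply/fsubsetP => p; rewrite in_fsetD1 => /andP [pd pt].
      by move/fsubsetP: t't => /(_ _ pt); rewrite in_fset1U (negPf pd).
    apply: (in_star _ _ sH cs); first exact: C1 tauH sub ne.
      exact: fsubset_trans sub taua.
    exact: fsubset_trans sub taus.
  apply/orP; left; apply: (C1 _ _ tauH) => //.
  apply/fsubsetP => p pt; move/fsubsetP: t't => /(_ _ pt); rewrite in_fset1U.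
  by case: eqP => [e|//]; rewrite -e pt in dt'.
- move=> t; rewrite in_fsetU => /orP [tH /actD [ta ct]|/newP [tau -> [tauH taua [s sH /andP [cs taus]]]] /actD [ta ct]].
    have [s sK et] := C2 _ tH ta; rewrite et in ct *.
    exists (contr_simplex u v s); first by apply/imfsetP; exists s.
    by rewrite Img // sig_notin.
  have ctau : c \notin tau by apply: contra ct => ct'; rewrite in_fset1U ct' orbT.
  have ctH : c |` tau \in H.
    apply: (C1 _ _ sH); last by apply/fset0Pn; exists c; rewrite fset1U1.
    by apply/fsubsetP => p; rewrite in_fset1U => /orP [/eqP ->//|/(fsubsetP taus)].
  have cta : active A (c |` tau).
    by apply/fsubsetP => p; rewrite in_fset1U => /orP [/eqP ->//|/(fsubsetP taua)].
  have [s1 s1K e1] := C2 _ ctH cta.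
  exists (contr_simplex u v s1); first by apply/imfsetP; exists s1.
  rewrite Img // -/rho -e1 sig_in ?fset1U1 //; congr (_ |` _).
  apply/fsetP => p; rewrite in_fsetD1 in_fset1U.
  by case: (eqVneq p c) => [->|]; [rewrite (negPf ctau) | rewrite /=].
- move=> s' /imfsetP [s sK ->]; rewrite Img // -/rho.
  have /andP [TH Ta] := C3 _ sK.
  case: (boolP (c \in [fset rho x | x in s])) => cT.
    rewrite sig_in //.
    case: (eqVneq ([fset rho x | x in s] `\ c) fset0) => [e|ne].
      rewrite e fsetU0 in_fsetU dH /=; apply/fsubsetP => p; rewrite inE => /eqP ->.
      by rewrite in_fsetD1 eq_sym cd.
    have sub : [fset rho x | x in s] `\ c `<=` [fset rho x | x in s] by apply: fsubsetDl.
    rewrite in_fsetU newI ?orbT /=.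
      apply/fsubsetP => p; rewrite in_fset1U => /orP [/eqP ->|]; first by rewrite in_fsetD1 eq_sym cd.
      rewrite !in_fsetD1 => /andP [-> /=]; exact: (fsubsetP Ta).
    apply: (in_star _ _ TH cT) => //; first exact: C1 TH sub ne.
    exact: fsubset_trans sub Ta.
  by rewrite sig_notin // in_fsetU TH /=; apply: actD'.
- move=> x' y' /vK' [x xK ->] /vK' [y yK ->]; rewrite !P //.
  rewrite /sig; case: (eqVneq (rho x) c) => [ex|nx]; case: (eqVneq (rho y) c) => [ey|ny].
  + by move=> _; have -> : x = y by apply: C4 => //; rewrite -/rho ex ey.
  + move=> edy; have := cuv x xK; rewrite ex eqxx => /(_ isT).
    have := cuv y yK; rewrite -edy eqxx orbT => /(_ isT).
    by rewrite /contr_map => /orP [] /eqP -> /orP [] /eqP ->; rewrite ?eqxx ?(negPf uv) // eq_sym (negPf uv).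
  + move=> edx; have := cuv x xK; rewrite edx eqxx orbT => /(_ isT).
    have := cuv y yK; rewrite ey eqxx => /(_ isT).
    by rewrite /contr_map => /orP [] /eqP -> /orP [] /eqP ->; rewrite ?eqxx ?(negPf uv) // eq_sym (negPf uv).
  + by move=> /(C4 _ _ xK yK) ->.
- split.
  + move=> t p; rewrite in_fsetU => /orP [tH pt|/newP [tau -> [tauH _ _]]].
      by apply: ltnW; apply: C5a pt.
    rewrite in_fset1U => /orP [/eqP ->|pt]; first by apply: ltnW; apply: C5b.
    by apply: ltnW; apply: C5a pt.
  + by move=> p; rewrite in_fsetD1 => /andP [_ /C5b /ltnW].
  + move=> s' x /imfsetP [s sK ->] /imfsetP [y ys ->].
    apply/imfsetP; exists [fset y]; first exact: C6 ys.
    by rewrite /contr_simplex fset1_imgn.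
Qed.

Lemma contr_inv i st u v : coning_inv i st -> op_valid (cK st) (Contr u v) ->
  coning_inv i.+1 (cstep i st (Contr u v)).
Proof.
move=> Inv [uv [uK vK]]; rewrite /cstep; case: ifP => _.
  by apply: contr_inv_gen => //; left.
by apply: contr_inv_gen => //; right.
Qed.

Lemma cstep_inv i st o : coning_inv i st -> op_valid (cK st) o ->
  coning_inv i.+1 (cstep i st o).
Proof. by case: o => [s|u v]; [apply: incl_inv | apply: contr_inv]. Qed.

End PartB.
Import PartB.

Module PartC.
Local Open Scope fset_scope.

Lemma states_from_nth ops n st k : k < size ops ->
  nth init_cstate (states_from n st ops) k.+1 =
  cstep (n + k) (nth init_cstate (states_from n st ops) k) (nth (Incl fset0) ops k).
Proof.
elim: ops n st k => [|o os IH] n st [|k] //=.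
  by rewrite addn0; case: os IH.
by rewrite ltnS => kl; rewrite IH // addnS.
Qed.

Lemma state_at_S ops k : k < size ops ->
  state_at ops k.+1 = cstep k (state_at ops k) (nth (Incl fset0) ops k).
Proof. exact: states_from_nth. Qed.

Lemma inv_all ops : valid_tower ops -> forall i, i <= size ops -> coning_inv i (state_at ops i).
Proof.
move=> V; elim=> [|i IH] Hi.
  have -> : state_at ops 0 = init_cstate by case: ops {V Hi}.
  exact: init_inv.
rewrite state_at_S //; apply: cstep_inv; first exact: IH (ltnW Hi).
exact: V.
Qed.

Definition act_part (S : cstate) := [fset t in chat S | active (cact S) t].

Lemma act_part_card i S : coning_inv i S -> #|` act_part S| <= #|` cK S|.
Proof.
move=> [_ C2 _ _ _].
have sub : act_part S `<=` [fset [fset crho S x | x in (s : tsimplex)] | s in cK S].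
  apply/fsubsetP => t; rewrite /act_part !inE /= => /andP [tH ta].
  have [s sK ->] := C2 _ tH ta; by apply/imfsetP; exists s.
apply: leq_trans (fsubset_leq_card sub) _; exact: leq_imfset_card.
Qed.

Lemma star_sub S w : act_star (chat S) (cact S) w `<=` act_part S.
Proof.
apply/fsubsetP => t /star_inv [tH ta _]; rewrite /act_part !inE /=.
by apply/andP; split.
Qed.

Lemma new_card i S o : coning_inv i S -> op_valid (cK S) o ->
  #|` chat (cstep i S o) `\` chat S| <= maxn #|` cK S| #|` cK (cstep i S o)|.
Proof.
move=> Inv Vo; have APC := act_part_card Inv.
case: o Vo => [s|u v] Vo /=.
- have sub : (chat S `|` [fset [fset (if (x \in s) && ~~ is_vertex (cK S) x then (x, i) else crho S x) | x in s]]) `\` chat S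
             `<=` [fset [fset (if (x \in s) && ~~ is_vertex (cK S) x then (x, i) else crho S x) | x in s]].
    apply/fsubsetP => t; rewrite in_fsetD in_fsetU => /andP [tH]; by rewrite (negPf tH).
  apply: leq_trans (fsubset_leq_card sub) _; rewrite cardfs1.
  apply: leq_trans (leq_maxr _ _); rewrite cardfs_gt0; apply/fset0Pn.
  by exists s; rewrite in_fsetU inE eqxx orbT.
- case: ifP => _ /=.
  + set T := [fset _ |` t | t in _].
    have sub : (chat S `|` T) `\` chat S `<=` T.
      by apply/fsubsetP => t; rewrite in_fsetD in_fsetU => /andP [tH]; by rewrite (negPf tH).
    apply: leq_trans (fsubset_leq_card sub) _; apply: leq_trans (leq_imfset_card _ _ _) _.
    apply: leq_trans (leq_maxl _ _); apply: leq_trans APC.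
    exact: fsubset_leq_card (star_sub _ _).
  + set T := [fset _ |` t | t in _].
    have sub : (chat S `|` T) `\` chat S `<=` T.
      by apply/fsubsetP => t; rewrite in_fsetD in_fsetU => /andP [tH]; by rewrite (negPf tH).
    apply: leq_trans (fsubset_leq_card sub) _; apply: leq_trans (leq_imfset_card _ _ _) _.
    apply: leq_trans (leq_maxl _ _); apply: leq_trans APC.
    exact: fsubset_leq_card (star_sub _ _).
Qed.

Lemma width_ge ops i : i <= size ops -> #|` cK (state_at ops i)| <= width ops.
Proof.
move=> Hi; rewrite /width.
have := @leq_bigmax_cond _ (fun _ => true) (fun j : 'I_(size ops).+1 => #|` cK (state_at ops j)|) (Ordinal (n:=(size ops).+1) (m:=i) Hi) isT.
done.
Qed.

End PartC.
Import PartC.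

Module PartD.
Local Open Scope fset_scope.

Definition adds_of (bs : seq (seq hsimplex * seq hsimplex)) := flatten (map fst bs).

Definition blk (ad : seq hsimplex) (p : seq hsimplex * seq hsimplex) : seq elem :=
  [seq ADDITION (index s ad) (map (fun f => index f ad) (facets s)) | s <- p.1] ++
  [seq INACTIVE (index s ad) | s <- p.2].

Lemma to_stream_blk bs : to_stream bs = flatten (map (blk (adds_of bs)) bs).
Proof. by []. Qed.

Lemma wi_inact N (ad : seq hsimplex) (l2 : seq hsimplex) :
  wi N [seq INACTIVE (index s ad) | s <- l2].
Proof. by elim: l2. Qed.

Lemma nadd_inact (ad : seq hsimplex) (l2 : seq hsimplex) :
  nadd [seq INACTIVE (index s ad) | s <- l2] = 0.
Proof. by elim: l2. Qed.

Lemma inacts_inact (ad : seq hsimplex) (l2 : seq hsimplex) :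
  inacts [seq INACTIVE (index s ad) | s <- l2] = [seq index s ad | s <- l2].
Proof. by elim: l2 => //= s l ->. Qed.

Lemma blk_facts (ad : seq hsimplex) N (p : seq hsimplex * seq hsimplex) :
  (forall m, m < size p.1 -> index (nth fset0 p.1 m) ad = (N + m)%N /\
     all (fun f => index f ad < (N + m)%N) (facets (nth fset0 p.1 m))) ->
  [/\ wi N (blk ad p), nadd (blk ad p) = size p.1 &
      inacts (blk ad p) = [seq index s ad | s <- p.2]].
Proof.
case: p => l1 l2 /=; rewrite /blk /=.
elim: l1 N => [|s l1 IH] N H /=.
  by split; [apply: wi_inact | rewrite nadd_inact | rewrite inacts_inact].
have [H0a H0b] := H 0 isT; rewrite addn0 in H0a H0b.
have H' : forall m, m < size l1 -> index (nth fset0 l1 m) ad = (N.+1 + m)%N /\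
     all (fun f => index f ad < (N.+1 + m)%N) (facets (nth fset0 l1 m)).
  by move=> m mlt; have := H m.+1 mlt; rewrite /= addSnnS.
have [W1 W2 W3] := IH _ H'.
split=> //=; last by rewrite W2.
split=> //; split=> //.
by rewrite all_map; apply: sub_all H0b => f.
Qed.

Lemma run_cat (P : pred matrix) st l1 l2 :
  all P (run_from st l1) -> all P (run_from (fin st l1) l2) -> all P (run_from st (l1 ++ l2)).
Proof.
elim: l1 st => [|e l1 IH] st //=.
case E: (process st e) => [tr st'] /=.
rewrite !all_cat => /andP [-> /andP [-> H1]] H2 /=.
by apply: IH => //; rewrite /fin /= E in H2.
Qed.

Lemma fin_cat st l1 l2 : fin st (l1 ++ l2) = fin (fin st l1) l2.
Proof. by rewrite /fin foldl_cat. Qed.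

Lemma rest_count N st (ad : seq hsimplex) (S : cstate) :
  alg_inv N st -> uniq ad -> N <= size ad ->
  (forall l, l < N -> nth fset0 ad l \in chat S) ->
  (forall t, t \in chat S -> ~~ active (cact S) t -> index t ad \in ainact st) ->
  ncols (aM st) <= #|` act_part S|.
Proof.
move=> [I0 I1 [P1 P2] I3] uad Nad Hin Hinact.
set M := aM st.
pose g k := nth fset0 ad (odflt 0 (pivot (lookup M k))).
have Hp : forall k, k \in domf M -> exists2 p, pivot (lookup M k) = Some p & p < N.
  move=> k kM; case E: (pivot (lookup M k)) => [p|]; last by have := P1 k kM; rewrite E.
  by exists p => //; move/pivotP: E => [pc _]; apply: I1 pc.
have inj : {in domf M &, injective g}.
  move=> k1 k2 k1M k2M; rewrite /g.
  have [p1 E1 l1] := Hp _ k1M; have [p2 E2 l2] := Hp _ k2M; rewrite E1 E2 /= => e.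
  have : p1 = p2.
    by apply/eqP; rewrite -(nth_uniq fset0 (leq_trans l1 Nad) (leq_trans l2 Nad) uad); apply/eqP.
  by move=> ep; apply: P2 => //; rewrite E1 E2 ep.
have sub : [fset g k | k in domf M] `<=` act_part S.
  apply/fsubsetP => t /imfsetP [k kM ->]; rewrite /act_part !inE /=.
  have [p E lt] := Hp _ kM; rewrite /g E /=.
  apply/andP; split; first exact: Hin.
  apply/negPn/negP => na; have := Hinact _ (Hin _ lt) na.
  rewrite index_uniq ?(leq_trans lt Nad) //; apply/negP; exact: I3 E.
have ce : #|` [fset g k | k in domf M]| = #|` domf M| by apply/eqP/card_in_imfsetP.
rewrite /ncols -ce; exact: fsubset_leq_card sub.
Qed.

End PartD.
Import PartD.

Module PartE.
Local Open Scope fset_scope.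

Lemma facet_props (s f : hsimplex) : f \in facets s ->
  [/\ f `<=` s, f != fset0 & #|` f| < #|` s|].
Proof.
rewrite /facets; case: ifP => // gt1 /mapP [x xs ->].
have xs' : x \in s by [].
have cs := cardfsD1 x s; rewrite xs' /= in cs.
split; first exact: fsubsetDl.
  by rewrite -cardfs_gt0; move: gt1; rewrite cs add1n ltnS.
by rewrite cs add1n.
Qed.

Lemma state_at0 ops : state_at ops 0 = init_cstate.
Proof. by case: ops. Qed.

Lemma chat_mono ops i : i < size ops ->
  chat (state_at ops i) `<=` chat (state_at ops i.+1).
Proof.
move=> lt; rewrite state_at_S //; case: (nth _ ops i) => [s|u v] /=.
  exact: fsubsetUl.
by case: ifP => _ /=; apply: fsubsetUl.
Qed.

Lemma take_rcons_bs (bs : seq (seq hsimplex * seq hsimplex)) i : i < size bs ->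
  flatten (map fst (take i.+1 bs)) = flatten (map fst (take i bs)) ++ (nth ([::], [::]) bs i).1.
Proof.
move=> lt; rewrite (take_nth ([::], [::]) lt) -cats1 map_cat flatten_cat /= cats0 //.
Qed.

Lemma take_rcons_blk ad (bs : seq (seq hsimplex * seq hsimplex)) i : i < size bs ->
  flatten (map (blk ad) (take i.+1 bs)) =
  flatten (map (blk ad) (take i bs)) ++ blk ad (nth ([::], [::]) bs i).
Proof.
move=> lt; rewrite (take_nth ([::], [::]) lt) -cats1 map_cat flatten_cat /= cats0 //.
Qed.

Lemma prefix_perm ops bs : coning_blocks ops bs -> forall i, i <= size ops ->
  perm_eq (flatten (map fst (take i bs))) (enum_fset (chat (state_at ops i))).
Proof.
move=> [sz CB]; elim=> [|i IH] Hi.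
  by rewrite take0 state_at0 /=.
have lt : i < size ops by [].
have [p1 _ _] := CB i lt.
rewrite take_rcons_bs ?sz //.
apply: perm_trans (perm_cat (IH (ltnW Hi)) p1) _.
apply: uniq_perm.
- rewrite cat_uniq !fset_uniq /= andbT; apply/hasPn => x; rewrite in_fsetD.
  by case/andP.
- exact: fset_uniq.
- move=> x; rewrite mem_cat !in_fsetD.
  have := chat_mono lt => /fsubsetP sub.
  apply/orP/idP => [[xS|/andP [_ ->]]|xS'] //; first exact: sub.
  by case xS: (x \in chat (state_at ops i)); [left | right].
Qed.

Lemma uniq_adds ops bs : coning_blocks ops bs -> uniq (adds_of bs).
Proof.
move=> CB; have := prefix_perm CB (leqnn _).
case: CB => sz _; rewrite -sz take_size => /perm_uniq ->; exact: fset_uniq.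
Qed.

Definition st0 := AState [fmap]%fmap [::] [::].

Lemma alg_inv0 : alg_inv 0 st0.
Proof.
split=> //=.
- by move=> k x; rewrite /lookup /= fnd_fmap0 inE.
Qed.

Lemma main_ind ops bs : valid_tower ops -> coning_blocks ops bs ->
  forall i, i <= size ops ->
  [/\ all (fun M => ncols M <= 2 * width ops)
        (run_from st0 (flatten (map (blk (adds_of bs)) (take i bs)))),
      alg_inv (size (flatten (map fst (take i bs))))
        (fin st0 (flatten (map (blk (adds_of bs)) (take i bs)))) &
      forall t, t \in chat (state_at ops i) -> ~~ active (cact (state_at ops i)) t ->
        index t (adds_of bs) \in ainact (fin st0 (flatten (map (blk (adds_of bs)) (take i bs))))].
Proof.
move=> V CB; have [sz CBi] := CB.
have uad := uniq_adds CB.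
elim=> [|i IH] Hi.
  rewrite take0 /= state_at0; split=> //; last exact: alg_inv0.
have lt : i < size ops by [].
have ltb : i < size bs by rewrite sz.
have [G1 G2 G3] := IH (ltnW Hi).
set ab := nth ([::], [::]) bs i.
set Pi := flatten (map fst (take i bs)) in G2 *.
set ad := adds_of bs.
set l := flatten (map (blk ad) (take i bs)) in G1 G2 G3 *.
set st := fin st0 l in G2 G3 *.
set S := state_at ops i in G3 *.
set S' := state_at ops i.+1.
have [p1 srt p2] := CBi i lt; rewrite -/ab -/S -/S' in p1 srt p2.
have pP := prefix_perm CB (ltnW Hi); rewrite -/Pi -/S in pP.
have pP' := prefix_perm CB Hi; rewrite take_rcons_bs // -/Pi -/ab -/S' in pP'.
have Inv := inv_all V (ltnW Hi); rewrite -/S in Inv.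
have Inv' := inv_all V Hi; rewrite -/S' in Inv'.
have Hstep : S' = cstep i S (nth (Incl fset0) ops i) by rewrite /S' state_at_S.
have adE : ad = Pi ++ ab.1 ++ flatten (map fst (drop i.+1 bs)).
  rewrite catA -take_rcons_bs // /ad /adds_of -flatten_cat -map_cat cat_take_drop //.
have uP : uniq (Pi ++ ab.1) by rewrite (perm_uniq pP') fset_uniq.
have memP' : forall t, (t \in Pi ++ ab.1) = (t \in chat S').
  by move=> t; rewrite (perm_mem pP').
have memP : forall t, (t \in Pi) = (t \in chat S) by move=> t; rewrite (perm_mem pP).
have mem1 : forall t, (t \in ab.1) = (t \in chat S' `\` chat S).
  by move=> t; rewrite (perm_mem p1).
have uab : uniq ab.1 by move: uP; rewrite cat_uniq => /and3P [].
have idx1 : forall t, t \in ab.1 -> index t ad = (size Pi + index t ab.1)%N.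
  move=> t tab; rewrite adE index_cat.
  have -> : (t \in Pi) = false.
    by move: tab; rewrite mem1 memP in_fsetD => /andP [/negPf].
  by rewrite index_cat tab.
have idx0 : forall t, t \in Pi -> index t ad < size Pi.
  by move=> t tP; rewrite adE index_cat tP index_mem.
have Hbf : forall m, m < size ab.1 -> index (nth fset0 ab.1 m) ad = (size Pi + m)%N /\
     all (fun f => index f ad < (size Pi + m)%N) (facets (nth fset0 ab.1 m)).
  move=> m mlt; set s := nth fset0 ab.1 m.
  have sab : s \in ab.1 by apply: mem_nth.
  split; first by rewrite idx1 // index_uniq.
  apply/allP => f /facet_props [fs f0 fsz].
  have sS' : s \in chat S' by move: sab; rewrite mem1 in_fsetD => /andP [].
  have [C1 _ _ _ _] := Inv'.
  have fS' := C1 _ _ sS' fs f0.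
  rewrite -memP' mem_cat in fS'; case/orP: fS' => [fP|fab].
    by apply: leq_trans (idx0 _ fP) (leq_addr _ _).
  rewrite idx1 // ltn_add2l ltnNge; apply/negP => mle.
  have Hm : m \in [pred n | n < size ab.1] := mlt.
  have Hf : index f ab.1 \in [pred n | n < size ab.1] by rewrite inE index_mem.
  have tr : transitive (fun s t : hsimplex => #|` s| <= #|` t|).
    by move=> ? ? ? /leq_trans; apply.
  have rf : reflexive (fun s t : hsimplex => #|` s| <= #|` t|) by move=> ?.
  have := sorted_leq_nth tr rf fset0 srt m (index f ab.1) Hm Hf mle.
  by rewrite nth_index // -/s leqNgt fsz.
have [B1 B2 B3] := blk_facts Hbf.
have [R1 R2 R3 R4 R5] := run_spec G2 B1.
rewrite B2 in R1 R2 R3.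
have Nad : size Pi <= size ad by rewrite adE size_cat leq_addr.
have rc : ncols (aM st) <= #|` act_part S|.
  apply: (rest_count G2 uad Nad) => //.
  move=> k klt; rewrite -memP -/ad adE nth_cat klt; exact: mem_nth.
have bound : (ncols (aM st) + size ab.1 <= 2 * width ops)%N.
  rewrite mul2n -addnn; apply: leq_add.
    apply: leq_trans rc _; apply: leq_trans (act_part_card Inv) _; exact: width_ge (ltnW Hi).
  rewrite (perm_size p1).
  have nc := new_card Inv (V i lt); rewrite -Hstep in nc.
  apply: leq_trans nc _; rewrite geq_max !width_ge //; exact: ltnW.
rewrite take_rcons_blk // -/ab -/ad -/l take_rcons_bs // -/Pi -/ab fin_cat -/st.
split.
- apply: run_cat => //; apply: sub_all R1 => M H; exact: leq_trans H bound.
- by rewrite size_cat.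
- move=> t tS' tna.
  case: (boolP (t \in newly_inactive S S')) => tni.
    apply: R5; rewrite B3; apply/mapP; exists t => //.
    by rewrite (perm_mem p2).
  apply: R4; apply: G3.
    by move: tni; rewrite /newly_inactive !inE /= tS' tna /= negb_or => /andP [/negPn].
  by move: tni; rewrite /newly_inactive !inE /= tS' tna /= negb_or => /andP [_].
Qed.


End PartE.
Import PartE.

Local Open Scope fset_scope.

Theorem lemma19 (ops : seq top) (bs : seq (seq hsimplex * seq hsimplex)) :
  valid_tower ops ->
  coning_blocks ops bs ->
  all (fun M => ncols M <= 2 * width ops) (alg_trace (to_stream bs)).
Proof.
move=> V CB; have [G1 _ _] := main_ind V CB (leqnn _).
by move: G1; case: CB => sz _; rewrite -sz take_size.
Qed.
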